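(* For every even integer $c\ge 4$ there exist a graph $G=(V,E)$, a $(1/c,c)$-kernel $\kappa(G)=(V,\kappa(E))$ of $G$ (with respect to some partition of $V$ into tight and slack nodes), and a maximal matching $M$ in $\kappa(G)$ such that the size of a maximum matching in $G$ is at least $4|M|$.
   Context: Let $\mathcal N_v$ denote the set of neighbors of $v$ in $G$. A subgraph $\kappa(G)=(V,\kappa(E))$ with $\kappa(E)\subseteq E$ is given, together with a partition of $V$ into tight nodes $\kappa_T(V)$ and slack nodes $\kappa_S(V)$. For $v\in V$ let $\kappa(\mathcal N_v)=\{u\in\mathcal N_v:(u,v)\in\kappa(E)\}$ (the friends of $v$). For $c\ge1$ and $\epsilon\in[0,1/3)$, $\kappa(G)$ is an $(\epsilon,c)$-kernel of $G$ (w.r.t. this partition) iff: (i) $|\kappa(\mathcal N_v)|\le(1+\epsilon)c$ for all $v\in V$; (ii) $|\kappa(\mathcal N_v)|\ge(1-\epsilon)c$ for all $v\in\kappa_T(V)$; (iii) for all $u,v\in\kappa_S(V)$, if $(u,v)\in E$ then $(u,v)\in\kappa(E)$. *)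

(* Defs.v *)
From HB Require Import structures.
From mathcomp Require Import all_boot all_order all_algebra.
Set Implicit Arguments. Unset Strict Implicit. Unset Printing Implicit Defensive.
Import Order.TTheory GRing.Theory Num.Theory.

Definition simple_graph (T : finType) (E : rel T) : Prop :=
  irreflexive E /\ symmetric E.

Definition nbrs (T : finType) (E : rel T) (v : T) : {set T} := [set u | E u v].

(* (eps, c)-kernel: kE is the edge relation of the subgraph kappa(G),
   tight is the set of tight nodes (slack nodes are its complement). *)
Definition is_kernel (T : finType) (E kE : rel T) (tight : {set T})
    (eps : rat) (c : nat) : Prop :=
  [/\ ((1 <= c)%N /\ (0 <= eps)%R /\ (eps < 1 / 3)%R /\
       symmetric kE /\ subrel kE E),
      (forall v : T, (#|nbrs kE v|%:R <= (1 + eps) * c%:R :> rat)%R),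
      (forall v : T, v \in tight -> ((1 - eps) * c%:R <= #|nbrs kE v|%:R :> rat)%R)
    &
      (forall u v : T, u \notin tight -> v \notin tight -> E u v -> kE u v)].

Definition is_matching (T : finType) (E : rel T) (M : {set {set T}}) : bool :=
  [forall e in M, [exists u, [exists v, [&& u != v, E u v & e == [set u; v]]]]] &&
  [forall e in M, [forall f in M, (e != f) ==> [disjoint e & f]]].

Definition is_maximal_matching (T : finType) (E : rel T) (M : {set {set T}}) : Prop :=
  is_matching E M /\
  forall M' : {set {set T}}, is_matching E M' -> M \subset M' -> M' = M.

Definition max_matching_size (T : finType) (E : rel T) : nat :=
  \max_(M : {set {set T}} | is_matching E M) #|M|.

(* Main.v *)
Require Import Defs.
From HB Require Import structures.
From mathcomp Require Import all_boot all_order all_algebra.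
From mathcomp Require Import zify.
Import Order.TTheory GRing.Theory Num.Theory.

Definition partner (a : nat) := (a + 1 - 2 * (a %% 2))%N.

Definition kEn (c a b : nat) : bool :=
  [|| [&& a < c, b < c & b == partner a],
      [&& a < c, c <= b, b < 2 * c & b != a + c] |
      [&& c <= a, a < 2 * c, b < c & a != b + c]]%N.

Definition En (c a b : nat) : bool :=
  [|| kEn c a b, (a < 2 * c) && (b == a + 2 * c) | (b < 2 * c) && (a == b + 2 * c)]%N.

Lemma kEn_sym c a b : (c %% 2 = 0)%N -> kEn c a b = kEn c b a.
Proof. move=> h; rewrite /kEn /partner; apply/idP/idP; lia. Qed.

Lemma En_sym c a b : (c %% 2 = 0)%N -> En c a b = En c b a.
Proof. move=> h; rewrite /En /kEn /partner; apply/idP/idP; lia. Qed.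

Lemma En_irr c a : En c a a = false.
Proof. rewrite /En /kEn /partner; apply/negbTE; lia. Qed.

Lemma kEn_En c a b : kEn c a b -> En c a b.
Proof. by rewrite /En => ->. Qed.

Lemma rat_up (c : nat) : (0 < c)%N -> ((1 + 1 / c%:R) * c%:R = (c.+1)%:R :> rat)%R.
Proof.
move=> hc; have hc0 : (c%:R != 0 :> rat)%R by rewrite pnatr_eq0 -lt0n.
by rewrite mulrDl mul1r mul1r mulVf // -addn1 natrD addrC.
Qed.

Lemma rat_lo (c : nat) : (0 < c)%N -> ((1 - 1 / c%:R) * c%:R = (c.-1)%:R :> rat)%R.
Proof.
move=> hc; have hc0 : (c%:R != 0 :> rat)%R by rewrite pnatr_eq0 -lt0n.
rewrite mulrBl mul1r mul1r mulVf //.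
by case: c hc {hc0} => // c _; rewrite /= -addn1 natrD addrK.
Qed.

Lemma in2 (T : finType) (x a b : T) : (x \in [set a; b]) = (x == a) || (x == b).
Proof. by rewrite !inE. Qed.

Lemma disj2 (T : finType) (a b c d : T) :
  a != c -> a != d -> b != c -> b != d -> [disjoint [set a; b] & [set c; d]].
Proof.
move=> h1 h2 h3 h4; apply/pred0P => x /=; rewrite !in2.
apply/negbTE/negP; case/andP; case/orP => /eqP -> ; case/orP => /eqP E;
  move: h1 h2 h3 h4; rewrite E eqxx //.
Qed.

Theorem theorem3p11 (c : nat) (hc4 : (4 <= c)%N) (hceven : ~~ odd c) :
  exists (n : nat) (E kE : rel 'I_n) (tight : {set 'I_n}) (M : {set {set 'I_n}}),
    [/\ simple_graph E,
        is_kernel E kE tight (1 / c%:R)%R c,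
        is_maximal_matching kE M,
        (0 < #|M|)%N
      & (4 * #|M| <= max_matching_size E)%N].
Proof.
have hev : (c %% 2 = 0)%N by rewrite modn2 (negbTE hceven).
case: c hc4 hceven hev => [//|c'] hc4 hceven hev.
have [c hc] : exists c, c = c'.+1 by eexists.
rewrite -hc in hc4 hceven hev *.
have [N hN] : exists N, N = (4 * c' + 3)%N by eexists.
pose kE := fun x y : 'I_N.+1 => kEn c x y.
pose E := fun x y : 'I_N.+1 => En c x y.
pose tight := [set x : 'I_N.+1 | (nat_of_ord x < 2 * c)%N].
pose fM := fun i : 'I_(c %/ 2) => [set (inord (2 * i) : 'I_N.+1); inord (2 * i + 1)].
pose M := fM @: [set: 'I_(c %/ 2)].
have fM_inj : injective fM.
  move=> i j e.
  have : (inord (2 * i) : 'I_N.+1) \in fM j by rewrite -e in2 eqxx.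
  have hi := ltn_ord i; have hj := ltn_ord j.
  rewrite in2 -!(inj_eq val_inj) /= !inordK; try lia.
  move=> h; apply/ord_inj; lia.
have cardM : #|M| = (c %/ 2)%N by rewrite card_imset // cardsT card_ord.
exists N.+1, E, kE, tight, M.
have hc0 : (0 < c)%N by lia.
split.
- by split; [move=> x; exact: En_irr | move=> x y; exact: En_sym].
- split.
  + split; first by lia.
    split; first by rewrite divr_ge0.
    split.
      by rewrite !div1r ltf_pV2 ?posrE ?ltr0n // ltr_nat.
    split; [move=> x y; exact: kEn_sym | move=> x y; exact: kEn_En].
  + move=> v; rewrite rat_up // ler_nat.
    have hvN := ltn_ord v.
    pose fU := fun j : 'I_c => (inord (j + c) : 'I_N.+1).
    pose fA := fun j : 'I_c => (inord j : 'I_N.+1).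
    case: (ltnP v c) => hv0.
      have sub : nbrs kE v \subset inord (partner v) |: (fU @: [set: 'I_c]).
        apply/subsetP => x; rewrite /nbrs inE /kE => hx.
        have hxN := ltn_ord x.
        case: (ltnP x c) => hx0.
          rewrite in_setU1; apply/orP; left; apply/eqP; apply/ord_inj.
          rewrite inordK; move: hx; rewrite /kEn /partner; lia.
        rewrite in_setU1; apply/orP; right; apply/imsetP.
        have hxc : (x - c < c)%N by move: hx; rewrite /kEn; lia.
        exists (Ordinal hxc) => //; apply/ord_inj; rewrite /fU /= inordK; lia.
      apply: leq_trans (subset_leq_card sub) _.
      rewrite cardsU1 -(add1n c); apply: leq_add; first by case: (_ \notin _).
      by apply: leq_trans (leq_imset_card _ _) _; rewrite cardsT card_ord.
    case: (ltnP v (2 * c)) => hv1.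
      have sub : nbrs kE v \subset (fA @: [set: 'I_c]).
        apply/subsetP => x; rewrite /nbrs inE /kE => hx.
        have hxN := ltn_ord x.
        apply/imsetP.
        have hxc : (x < c)%N by move: hx; rewrite /kEn; lia.
        exists (Ordinal hxc) => //; apply/ord_inj; rewrite /fA /= inordK; lia.
      apply: leq_trans (subset_leq_card sub) _.
      by apply: leq_trans (leq_imset_card _ _) _; rewrite cardsT card_ord.
    have sub : nbrs kE v \subset set0.
      apply/subsetP => x; rewrite /nbrs inE /kE => hx.
      move: hx; rewrite /kEn; lia.
    by apply: leq_trans (subset_leq_card sub) _; rewrite cards0.
  + move=> v; rewrite inE => hv; rewrite rat_lo // ler_nat.
    have hvN := ltn_ord v.
    case: (ltnP v c) => hv0.
      pose f := fun j : 'I_c => (inord (j + c) : 'I_N.+1).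
      have finj : injective f.
        move=> j1 j2 /(congr1 (@nat_of_ord _)); rewrite /f.
        have h1 := ltn_ord j1; have h2 := ltn_ord j2.
        rewrite !inordK; try lia.
        move=> h; apply/ord_inj; lia.
      pose j0 := Ordinal hv0.
      have sub : f @: [set~ j0] \subset nbrs kE v.
        apply/subsetP => x /imsetP [j hj ->]; rewrite /nbrs inE /kE /f.
        have h1 := ltn_ord j.
        move: hj; rewrite !inE -(inj_eq val_inj) /= => hj.
        rewrite /kEn inordK; lia.
      apply: leq_trans (subset_leq_card sub).
      by rewrite card_imset // cardsC1 card_ord.
    pose f := fun j : 'I_c => (inord j : 'I_N.+1).
    have finj : injective f.
      move=> j1 j2 /(congr1 (@nat_of_ord _)); rewrite /f.
      have h1 := ltn_ord j1; have h2 := ltn_ord j2.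
      rewrite !inordK; try lia.
      move=> h; apply/ord_inj; lia.
    have hvc : (v - c < c)%N by lia.
    pose j0 := Ordinal hvc.
    have sub : f @: [set~ j0] \subset nbrs kE v.
      apply/subsetP => x /imsetP [j hj ->]; rewrite /nbrs inE /kE /f.
      have h1 := ltn_ord j.
      move: hj; rewrite !inE -(inj_eq val_inj) /= => hj.
      rewrite /kEn inordK; lia.
    apply: leq_trans (subset_leq_card sub).
    by rewrite card_imset // cardsC1 card_ord.
  + move=> u v; rewrite !inE -!leqNgt => hu hv.
    rewrite /E /kE /En /kEn; lia.
- have hM : is_matching kE M.
    apply/andP; split.
      apply/forall_inP => e /imsetP [i _ ->].
      have hi := ltn_ord i.
      apply/existsP; exists (inord (2 * i)); apply/existsP; exists (inord (2 * i + 1)).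
      rewrite eqxx andbT -(inj_eq val_inj) /kE /= /kEn /partner !inordK; lia.
    apply/forall_inP => e /imsetP [i _ ->]; apply/forall_inP => f /imsetP [j _ ->].
    apply/implyP => hne.
    have : i != j by apply: contra hne => /eqP ->.
    rewrite -(inj_eq val_inj) /= => hij.
    have hi := ltn_ord i; have hj := ltn_ord j.
    apply: disj2; rewrite -(inj_eq val_inj) /= !inordK; lia.
  split => // M' hM' sub.
  apply/eqP; rewrite eqEsubset sub andbT.
  apply/subsetP => e he.
  case/andP: hM' => /forall_inP h1 /forall_inP h2.
  have /existsP [u /existsP [v /and3P [huv hk /eqP ee]]] := h1 e he.
  have [w hwe hw] : exists2 w : 'I_N.+1, w \in e & (w < c)%N.
    case: (ltnP u c) => hu.
      by exists u => //; rewrite ee in2 eqxx.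
    exists v; first by rewrite ee in2 eqxx orbT.
    by move: hk; rewrite /kE /kEn; lia.
  have hi : (w %/ 2 < c %/ 2)%N by lia.
  have he0 : fM (Ordinal hi) \in M' by apply: (subsetP sub); apply: imset_f.
  have hwe0 : w \in fM (Ordinal hi).
    have hwN := ltn_ord w.
    rewrite /fM in2 -!(inj_eq val_inj) /= !inordK; lia.
  case: (e =P fM (Ordinal hi)) => [-> | ne]; first by apply: imset_f.
  have /forall_inP/(_ _ he0)/implyP := h2 e he.
  move/(_ (introN eqP ne)); rewrite -setI_eq0 => /eqP/setP/(_ w).
  by rewrite !inE hwe /=; move: hwe0; rewrite /fM in2 => /= ->.
- rewrite cardM; lia.
- pose g := fun x : 'I_(2 * c) =>
    [set (inord x : 'I_N.+1); inord (x + 2 * c)].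
  have ginj : injective g.
    move=> i j e.
    have : (inord i : 'I_N.+1) \in g j by rewrite -e in2 eqxx.
    have hi := ltn_ord i; have hj := ltn_ord j.
    rewrite in2 -!(inj_eq val_inj) /= !inordK; try lia.
    move=> h; apply/ord_inj; lia.
  have hM2 : is_matching E (g @: [set: 'I_(2 * c)]).
    apply/andP; split.
      apply/forall_inP => e /imsetP [i _ ->].
      have hi := ltn_ord i.
      apply/existsP; exists (inord i); apply/existsP; exists (inord (i + 2 * c)).
      rewrite eqxx andbT -(inj_eq val_inj) /E /= /En /kEn /partner !inordK; lia.
    apply/forall_inP => e /imsetP [i _ ->]; apply/forall_inP => f /imsetP [j _ ->].
    apply/implyP => hne.
    have : i != j by apply: contra hne => /eqP ->.
    rewrite -(inj_eq val_inj) /= => hij.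
    have hi := ltn_ord i; have hj := ltn_ord j.
    apply: disj2; rewrite -(inj_eq val_inj) /= !inordK; lia.
  apply: leq_trans (leq_bigmax_cond _ hM2).
  rewrite card_imset // cardsT card_ord. rewrite card_imset // cardsT card_ord. by rewrite -[4]/(2 * 2) -mulnA leq_mul2l (mulnC 2) leq_trunc_div.
Qed.
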